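(* Assume the standing assumptions (R), (B), (C), (Lip), (E), (Q) below hold. Let $C_S$ be the constant with $\mathbb{E}_{\mathbf{x}}[\sup_{\boldsymbol\theta\in\boldsymbol\Theta}|\hat J(\boldsymbol\theta;\mathbf{x}_1^N)-J(\boldsymbol\theta)|]\le C_S/\sqrt N$ for all $N$, and $C_{\boldsymbol\theta}$ the constant with $\mathbb{E}_{\mathbf{x}}[\sup_{\|\boldsymbol\theta-\boldsymbol\theta^*\|_2\le\delta}|\Delta_N(\boldsymbol\theta)|]\le C_{\boldsymbol\theta}\sqrt P\delta/\sqrt N$ for all $\delta>0$ and all $N$. Then for every $\epsilon>0$ and all $N\ge N':=16C_S^2/(\epsilon^2\lambda^2\eta^4)$, with probability at least $1-\epsilon$, $$\sqrt N\,\|\hat{\boldsymbol\theta}_N-\boldsymbol\theta^*\|_2\le\frac{8C_{\boldsymbol\theta}\sqrt P}{\epsilon\lambda}.$$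
   Context: Let $p$ be a probability density on $\mathbb{R}^D$ with support $\mathcal{X}$, where $\mathcal{X}$ is either $\mathbb{R}^D$ or an open bounded subset of $\mathbb{R}^D$ with piecewise smooth boundary $\partial\mathcal{X}$. Let $\mathbf{x}_1,\dots,\mathbf{x}_N$ (written $\mathbf{x}_1^N$) be i.i.d. samples from $p$; $\mathbb{E}_{\mathbf{x}}$ denotes expectation over a generic $\mathbf{x}\sim p$ or over the sample. Let $\boldsymbol\Theta\subset\mathbb{R}^P$ and let $s(\cdot;\boldsymbol\theta):\mathbb{R}^D\to\mathbb{R}^D$ be a parametric model; $\nabla_{\mathbf{x}}s(\mathbf{x};\boldsymbol\theta)$ is the $D\times D$ Jacobian. Define $\ell(\mathbf{x};\boldsymbol\theta)=\mathrm{tr}(\nabla_{\mathbf{x}}s(\mathbf{x};\boldsymbol\theta))+\tfrac12\|s(\mathbf{x};\boldsymbol\theta)\|_2^2$, $J(\boldsymbol\theta)=\mathbb{E}_{\mathbf{x}}[\ell(\mathbf{x};\boldsymbol\theta)]$, $\hat J(\boldsymbol\theta;\mathbf{x}_1^N)=\frac1N\sum_{i=1}^N\ell(\mathbf{x}_i;\boldsymbol\theta)$, $L(\boldsymbol\theta)=\tfrac12\mathbb{E}_{\mathbf{x}}\|s(\mathbf{x};\boldsymbol\theta)-\nabla_{\mathbf{x}}\log p(\mathbf{x})\|_2^2$, $\boldsymbol\theta^*\in\arg\min_{\boldsymbol\Theta}L$, and $\Delta_N(\boldsymbol\theta)=(\hat J(\boldsymbol\theta;\mathbf{x}_1^N)-J(\boldsymbol\theta))-(\hat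 J(\boldsymbol\theta^*;\mathbf{x}_1^N)-J(\boldsymbol\theta^* ))$. Standing assumptions: (R) $s(\cdot;\boldsymbol\theta)$ and $\nabla_{\mathbf{x}}\log p$ are differentiable in $\mathbf{x}$, $\mathbb{E}_{\mathbf{x}}\|s(\mathbf{x};\boldsymbol\theta)\|_2^2<\infty$ for all $\boldsymbol\theta$, and $\mathbb{E}_{\mathbf{x}}\|\nabla_{\mathbf{x}}\log p(\mathbf{x})\|_2^2<\infty$. (B) For every $\boldsymbol\theta$ and every sequence $\mathbf{x}_i\in\mathcal{X}$ with $\mathbf{x}_i\to\mathbf{x}\in\partial\mathcal{X}$, $s(\mathbf{x}_i;\boldsymbol\theta)p(\mathbf{x}_i)\to\mathbf{0}$. (Under (R),(B), $L(\boldsymbol\theta)=J(\boldsymbol\theta)+C$ with $C$ independent of $\boldsymbol\theta$.) (C) $\boldsymbol\Theta$ is compact. (Lip) There are $L_1,L_2$ with $\mathbb{E}[L_1(\mathbf{x})^2],\mathbb{E}[L_2(\mathbf{x})^2]<\infty$ such that $\|\nabla_{\mathbf{x}}s(\mathbf{x};\boldsymbol\theta_1)-\nabla_{\mathbf{x}}s(\mathbf{x};\boldsymbol\theta_2)\|_F\le L_1(\mathbf{x})\|\boldsymbol\theta_1-\boldsymbol\theta_2\|_2$ and $\|s(\mathbf{x};\boldsymbol\theta_1)s(\mathbf{x};\boldsymbol\theta_1)^T-s(\mathbf{x};\boldsymbol\theta_2)s(\mathbf{x};\boldsymbol\theta_2)^T\|_F\le L_2(\mathbf{x})\|\boldsymbol\theta_1-\boldsymbol\theta_2\|_2$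 for all $\boldsymbol\theta_1,\boldsymbol\theta_2$. (E) $\hat{\boldsymbol\theta}_N$ exactly minimizes $\hat J(\cdot;\mathbf{x}_1^N)$ over $\boldsymbol\Theta$. (Q) There exist $\lambda,\eta>0$ with $J(\boldsymbol\theta)\ge J(\boldsymbol\theta^* )+\lambda\|\boldsymbol\theta-\boldsymbol\theta^*\|_2^2$ whenever $\|\boldsymbol\theta-\boldsymbol\theta^*\|_2<\eta$, and $J(\boldsymbol\theta)\ge J(\boldsymbol\theta^* )+\lambda\eta^2$ whenever $\|\boldsymbol\theta-\boldsymbol\theta^*\|_2\ge\eta$. *)

(* Defs.v *)
From HB Require Import structures.
From mathcomp Require Import all_boot all_order all_algebra.
From mathcomp Require Import all_classical all_reals all_analysis measurable_realfun.
Set Implicit Arguments. Unset Strict Implicit. Unset Printing Implicit Defensive.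
Import Order.TTheory GRing.Theory Num.Theory.
Import numFieldNormedType.Exports.
Local Open Scope classical_set_scope.
Local Open Scope ring_scope.

(* R^D is modelled by row vectors 'rV[R]_D. *)
Definition borelRV (R : realType) (D : nat) :=
  g_sigma_algebraType (@open 'rV[R]_D).

Definition norm2 (R : realType) (n : nat) (v : 'rV[R]_n) : R :=
  Num.sqrt (\sum_(i < n) v 0 i ^+ 2).
Definition frob (R : realType) (m n : nat) (A : 'M[R]_(m, n)) : R :=
  Num.sqrt (\sum_(i < m) \sum_(j < n) A i j ^+ 2).

Definition grad (R : realType) (D : nat) (f : 'rV[R]_D -> R) (x : 'rV[R]_D)
  : 'rV[R]_D := \row_(i < D) derive f x (delta_mx 0 i).

(* lam is Lebesgue measure on the Borel sets of R^D: the measure of every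
   closed box [a,b] is the product of its side lengths (this determines the
   measure uniquely on Borel sets). *)
Definition is_lebesgue (R : realType) (D : nat)
  (lam : {measure set (borelRV R D) -> \bar R}) : Prop :=
  forall a b : 'rV[R]_D, (forall i, a 0 i <= b 0 i) ->
    lam [set x : borelRV R D | forall i, a 0 i <= (x : 'rV[R]_D) 0 i <= b 0 i]
    = (\prod_(i < D) (b 0 i - a 0 i))%:E.

Definition Ex (R : realType) (D : nat) (lam : {measure set (borelRV R D) -> \bar R})
  (p : 'rV[R]_D -> R) (f : 'rV[R]_D -> R) : \bar R :=
  (\int[lam]_(x in [set: borelRV R D]) (f x * p x)%:E)%E.

Definition ell (R : realType) (D P : nat) (s : 'rV[R]_D -> 'rV[R]_P -> 'rV[R]_D)
  (x : 'rV[R]_D) (th : 'rV[R]_P) : R :=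
  \tr (jacobian (fun y => s y th) x) + 2^-1 * norm2 (s x th) ^+ 2.

(* J(theta) = E_x[l(x;theta)] (real valued; integrability is assumed) *)
Definition Jfun (R : realType) (D P : nat) (lam : {measure set (borelRV R D) -> \bar R})
  (p : 'rV[R]_D -> R) (s : 'rV[R]_D -> 'rV[R]_P -> 'rV[R]_D) (th : 'rV[R]_P) : R :=
  fine (Ex lam p (fun x => ell s x th)).

Definition Jhat (R : realType) (D P : nat) (d : measure_display) (Omega : measurableType d)
  (s : 'rV[R]_D -> 'rV[R]_P -> 'rV[R]_D) (Xs : nat -> Omega -> 'rV[R]_D)
  (N : nat) (th : 'rV[R]_P) (w : Omega) : R :=
  N%:R^-1 * \sum_(i < N) ell s (Xs i w) th.

Definition Lscore (R : realType) (D P : nat) (lam : {measure set (borelRV R D) -> \bar R})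
  (p : 'rV[R]_D -> R) (s : 'rV[R]_D -> 'rV[R]_P -> 'rV[R]_D) (th : 'rV[R]_P) : \bar R :=
  Ex lam p (fun x => 2^-1 * norm2 (s x th - grad (fun y => ln (p y)) x) ^+ 2).

Definition DeltaN (R : realType) (D P : nat) (lam : {measure set (borelRV R D) -> \bar R})
  (p : 'rV[R]_D -> R) (d : measure_display) (Omega : measurableType d)
  (s : 'rV[R]_D -> 'rV[R]_P -> 'rV[R]_D) (Xs : nat -> Omega -> 'rV[R]_D)
  (thstar : 'rV[R]_P) (N : nat) (th : 'rV[R]_P) (w : Omega) : R :=
  (Jhat s Xs N th w - Jfun lam p s th) - (Jhat s Xs N thstar w - Jfun lam p s thstar).

Definition supJ (R : realType) (D P : nat) (lam : {measure set (borelRV R D) -> \bar R})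
  (p : 'rV[R]_D -> R) (d : measure_display) (Omega : measurableType d)
  (s : 'rV[R]_D -> 'rV[R]_P -> 'rV[R]_D) (Xs : nat -> Omega -> 'rV[R]_D)
  (Theta : set 'rV[R]_P) (N : nat) (w : Omega) : \bar R :=
  ereal_sup [set (`|Jhat s Xs N th w - Jfun lam p s th|)%:E | th in Theta].

Definition supDelta (R : realType) (D P : nat) (lam : {measure set (borelRV R D) -> \bar R})
  (p : 'rV[R]_D -> R) (d : measure_display) (Omega : measurableType d)
  (s : 'rV[R]_D -> 'rV[R]_P -> 'rV[R]_D) (Xs : nat -> Omega -> 'rV[R]_D)
  (Theta : set 'rV[R]_P) (thstar : 'rV[R]_P) (N : nat) (delta : R) (w : Omega) : \bar R :=
  ereal_sup [set (`|DeltaN lam p s Xs thstar N th w|)%:E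
            | th in [set th | Theta th /\ norm2 (th - thstar) <= delta]].

Definition mutually_independent (R : realType) (D : nat) (d : measure_display)
  (Omega : measurableType d) (Pr : probability Omega R) (Xs : nat -> Omega -> 'rV[R]_D)
  : Prop :=
  forall (I : seq nat) (A : nat -> set (borelRV R D)), uniq I ->
    (forall i, measurable (A i)) ->
    Pr (\bigcap_(i in [set i | i \in I]) (Xs i @^-1` A i)) =
    (\prod_(i <- I) Pr (Xs i @^-1` A i))%E.

(* Main.v *)
Require Import Defs.
From HB Require Import structures.
From mathcomp Require Import all_boot all_order all_algebra.
From mathcomp Require Import all_classical all_reals all_analysis measurable_realfun.
From mathcomp Require Import ring lra.
Import Order.TTheory GRing.Theory Num.Theory.
Import numFieldNormedType.Exports.
Local Open Scope classical_set_scope.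
Local Open Scope ring_scope.

Lemma markov_e d (T : measurableType d) (R : realType)
  (mu : {measure set T -> \bar R}) (f : T -> \bar R) (a : R) :
  measurable_fun setT f -> (forall x, (0 <= f x)%E) -> 0 < a ->
  (a%:E * mu [set x | a%:E <= f x] <= \int[mu]_(x in setT) f x)%E.
Proof.
move=> mf f0 a0.
have := @le_integral_comp_abse d T R mu setT measurableT f a id (@measurable_id _ _ setT)
  (fun r h => h) (fun x y _ _ h => h) mf a0.
rewrite setTI /=.
under eq_set do rewrite gee0_abs//.
by under eq_integral do rewrite gee0_abs//.
Qed.

Lemma prob_bound d (T : measurableType d) (R : realType)
  (Pr : probability T R) (f : T -> \bar R) (a c : R) :
  measurable_fun setT f -> (forall x, (0 <= f x)%E) -> 0 < a ->
  (\int[Pr]_(x in setT) f x <= c%:E)%E ->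
  (Pr [set x | (a%:E <= f x)%E] <= (c / a)%:E)%E.
Proof.
move=> mf f0 a0 hc.
have mB : measurable [set x | (a%:E <= f x)%E].
  by rewrite -[X in measurable X]setTI; exact: emeasurable_fun_c_infty.
have h : (a%:E * Pr [set x | (a%:E <= f x)%E] <= c%:E)%E.
  apply: le_trans hc; exact: (@markov_e _ _ _ Pr _ _ mf f0 a0).
have E : Pr [set x | (a%:E <= f x)%E] = (fine (Pr [set x | (a%:E <= f x)%E]))%:E.
  by rewrite fineK //; exact: fin_num_measure.
move: h; rewrite E -EFinM lee_fin => h.
by rewrite lee_fin ler_pdivlMr // mulrC.
Qed.

Lemma geo (R : realFieldType) n : \sum_(k < n) ((2:R) ^+ k)^-1 = 2 - 2 * (2 ^+ n)^-1.
Proof.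
elim: n => [|n IH]; first by rewrite big_ord0 expr0 invr1 mulr1 subrr.
rewrite big_ord_recr /= IH exprS invfM.
have : (2:R)^+n != 0 by rewrite expf_neq0 // pnatr_eq0.
move=> h; field; by rewrite h.
Qed.

Theorem theorem2
  (R : realType) (D P : nat)
  (lam : {measure set (borelRV R D) -> \bar R}) (Hlam : is_lebesgue lam)
  (* density p with support X *)
  (p : 'rV[R]_D -> R) (X : set 'rV[R]_D)
  (Hp0 : forall x, 0 <= p x)
  (Hpm : measurable_fun [set: borelRV R D] (p : borelRV R D -> R))
  (Hp1 : (\int[lam]_(x in [set: borelRV R D]) (p x)%:E = 1)%E)
  (HX : X = [set x | 0 < p x])
  (HXshape : X = [set: 'rV[R]_D] \/ (open X /\ bounded_set X))
  (* i.i.d. sample x_1, x_2, ... ~ p on a probability space *)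
  (d : measure_display) (Omega : measurableType d) (Pr : probability Omega R)
  (Xs : nat -> Omega -> 'rV[R]_D)
  (HXm : forall i, measurable_fun [set: Omega] (Xs i : Omega -> borelRV R D))
  (HXlaw : forall i (A : set (borelRV R D)), measurable A ->
      Pr (Xs i @^-1` A) = (\int[lam]_(x in A) (p x)%:E)%E)
  (HXind : mutually_independent Pr Xs)
  (* model *)
  (Theta : set 'rV[R]_P) (s : 'rV[R]_D -> 'rV[R]_P -> 'rV[R]_D)
  (thstar : 'rV[R]_P)
  (* J is well defined: l(.;theta) is p-integrable *)
  (Hint : forall th, Theta th ->
      lam.-integrable [set: borelRV R D] (fun x => (ell s x th * p x)%:E))
  (* theta* in argmin_Theta L *)
  (Hstar : Theta thstar /\
      (forall th, Theta th -> (Lscore lam p s thstar <= Lscore lam p s th)%E))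
  (* (R) *)
  (HRs : forall th, Theta th -> forall x, differentiable (fun y => s y th) x)
  (HRp : forall x, X x ->
      differentiable (fun y => ln (p y)) x /\
      differentiable (grad (fun y => ln (p y))) x)
  (HRs2 : forall th, Theta th ->
      (Ex lam p (fun x => (norm2 (s x th) ^+ 2)%R) < +oo)%E)
  (HRp2 : (Ex lam p (fun x => (norm2 (grad (fun y => ln (p y)) x) ^+ 2)%R) < +oo)%E)
  (* (B) *)
  (HB : forall th, Theta th -> forall (u : nat -> 'rV[R]_D) (x : 'rV[R]_D),
      (forall i, X (u i)) -> u @ \oo --> x -> (closure X `\` X) x ->
      (fun i => p (u i) *: s (u i) th) @ \oo --> (0 : 'rV[R]_D))
  (* (C) *)
  (HC : compact Theta)
  (* (Lip) *)
  (L1 L2 : 'rV[R]_D -> R)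
  (HL1 : (Ex lam p (fun x => (L1 x ^+ 2)%R) < +oo)%E)
  (HL2 : (Ex lam p (fun x => (L2 x ^+ 2)%R) < +oo)%E)
  (HLip1 : forall x th1 th2, Theta th1 -> Theta th2 ->
      frob (jacobian (fun y => s y th1) x - jacobian (fun y => s y th2) x)
      <= L1 x * norm2 (th1 - th2))
  (HLip2 : forall x th1 th2, Theta th1 -> Theta th2 ->
      frob ((s x th1)^T *m s x th1 - (s x th2)^T *m s x th2)
      <= L2 x * norm2 (th1 - th2))
  (* (E) exact empirical minimizer *)
  (thhat : nat -> Omega -> 'rV[R]_P)
  (HE : forall N w, Theta (thhat N w) /\
      (forall th, Theta th -> Jhat s Xs N (thhat N w) w <= Jhat s Xs N th w))
  (* (Q) *)
  (lambda eta : R) (Hlambda : 0 < lambda) (Heta : 0 < eta)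
  (HQ1 : forall th, Theta th -> norm2 (th - thstar) < eta ->
      Jfun lam p s th >= Jfun lam p s thstar + lambda * norm2 (th - thstar) ^+ 2)
  (HQ2 : forall th, Theta th -> norm2 (th - thstar) >= eta ->
      Jfun lam p s th >= Jfun lam p s thstar + lambda * eta ^+ 2)
  (* the constants C_S and C_theta *)
  (CS Cth : R)
  (HCSm : forall N, measurable_fun [set: Omega] (supJ lam p s Xs Theta N : Omega -> \bar R))
  (HCS : forall N : nat, (0 < N)%N ->
      (\int[Pr]_(w in [set: Omega]) supJ lam p s Xs Theta N w
        <= (CS / Num.sqrt N%:R)%:E)%E)
  (HCthm : forall N delta, measurable_fun [set: Omega]
      (supDelta lam p s Xs Theta thstar N delta : Omega -> \bar R))
  (HCth : forall (delta : R) (N : nat), 0 < delta -> (0 < N)%N ->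
      (\int[Pr]_(w in [set: Omega]) supDelta lam p s Xs Theta thstar N delta w
        <= (Cth * Num.sqrt P%:R * delta / Num.sqrt N%:R)%:E)%E) :
  forall (eps : R), 0 < eps ->
  forall N : nat, 16 * CS ^+ 2 / (eps ^+ 2 * lambda ^+ 2 * eta ^+ 4) <= N%:R ->
  (* "with probability at least 1 - eps" (inner probability) *)
  exists A : set Omega, measurable A /\
    A `<=` [set w | Num.sqrt N%:R * norm2 (thhat N w - thstar)
                     <= 8 * Cth * Num.sqrt P%:R / (eps * lambda)] /\
    ((1 - eps)%:E <= Pr A)%E.
Proof.
move=> eps eps0 N HN.
set M := 8 * Cth * Num.sqrt P%:R / (eps * lambda).
have [Thstar _] := Hstar.
have norm2_0 : norm2 (thstar - thstar) = 0.
  rewrite subrr /norm2 big1 ?sqrtr0 // => i _; by rewrite mxE expr0n.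
have supD0 : forall N' delta w, 0 <= delta ->
    (0 <= supDelta lam p s Xs Theta thstar N' delta w)%E.
  move=> N' delta w d0; apply: le_trans (ereal_sup_ubound _); last first.
    by exists thstar => //; split => //; rewrite norm2_0.
  by rewrite lee_fin.
have supJ0 : forall N' w, (0 <= supJ lam p s Xs Theta N' w)%E.
  move=> N' w; apply: le_trans (ereal_sup_ubound _); last by exists thstar.
  by rewrite lee_fin.
have c0 : 0 <= Cth * Num.sqrt P%:R.
  have := HCth 1 1%N ltr01 isT.
  have i0 : (0 <= \int[Pr]_(w in [set: Omega]) supDelta lam p s Xs Theta thstar 1 1 w)%E.
    by apply: integral_ge0 => w _; apply: supD0.
  move=> h; have := le_trans i0 h.
  by rewrite lee_fin sqrtr1 mulr1 divr1.
have M0 : 0 <= M.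
  have -> : M = 8 * (Cth * Num.sqrt P%:R) / (eps * lambda) by rewrite /M mulrA.
  by rewrite divr_ge0 ?(mulr_ge0 _ c0) // ltW // mulr_gt0.
have [N0|Npos] := posnP N.
  exists setT; split; first exact: measurableT.
  split; first by move=> w _ /=; rewrite N0 sqrtr0 mul0r.
  by rewrite probability_setT lee_fin; lra.
have sN0 : 0 < Num.sqrt (N%:R : R) by rewrite sqrtr_gt0 ltr0n.
have F1 : forall w, Jfun lam p s (thhat N w) - Jfun lam p s thstar
    <= `|DeltaN lam p s Xs thstar N (thhat N w) w|.
  move=> w; have [Tw Hmin] := HE N w; have := Hmin _ Thstar.
  rewrite /DeltaN => h; rewrite -normrN; apply: le_trans _ (ler_norm _); lra.
have F2 : forall w delta, norm2 (thhat N w - thstar) <= delta ->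
    ((`|DeltaN lam p s Xs thstar N (thhat N w) w|)%:E
      <= supDelta lam p s Xs Theta thstar N delta w)%E.
  move=> w delta h; apply: ereal_sup_ubound.
  exists (thhat N w) => //; split => //; exact: (HE N w).1.
have F3 : forall w th, Theta th ->
    ((`|Jhat s Xs N th w - Jfun lam p s th|)%:E <= supJ lam p s Xs Theta N w)%E.
  by move=> w th Tth; apply: ereal_sup_ubound; exists th.
set B0 := [set w | ((lambda * eta ^+ 2 / 2)%:E <= supJ lam p s Xs Theta N w)%E].
have Far : forall w, eta <= norm2 (thhat N w - thstar) -> B0 w.
  move=> w hw; have [Tw _] := HE N w; have hq := HQ2 _ Tw hw.
  have h1 := F1 w.
  have h2 : `|DeltaN lam p s Xs thstar N (thhat N w) w| <=
     `|Jhat s Xs N (thhat N w) w - Jfun lam p s (thhat N w)|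
     + `|Jhat s Xs N thstar w - Jfun lam p s thstar| by exact: ler_normB.
  have e1 := F3 w _ Tw; have e2 := F3 w _ Thstar.
  rewrite /B0 /=.
  case: (lerP `|Jhat s Xs N (thhat N w) w - Jfun lam p s (thhat N w)|
              `|Jhat s Xs N thstar w - Jfun lam p s thstar|) => hab.
    by apply: le_trans _ e2; rewrite lee_fin; lra.
  by apply: le_trans _ e1; rewrite lee_fin; lra.
have mB0 : measurable B0.
  by rewrite /B0 -[X in measurable X]setTI; exact: emeasurable_fun_c_infty.
have PrB0 : (Pr B0 <= (eps / 2)%:E)%E.
  have a0 : 0 < lambda * eta ^+ 2 / 2 by rewrite divr_gt0 // mulr_gt0 // exprn_gt0.
  have PB := @prob_bound _ _ _ Pr _ _ _ (HCSm N) (supJ0 N) a0 (HCS N Npos).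
  apply: le_trans PB _.
  rewrite lee_fin.
  set q := eps * lambda * eta ^+ 2.
  have q0 : 0 < q by rewrite /q !mulr_gt0 // exprn_gt0.
  have key : 4 * CS <= q * Num.sqrt N%:R.
    have Z : eps ^+ 2 * lambda ^+ 2 * eta ^+ 4 = q ^+ 2 by rewrite /q; ring.
    move: HN; rewrite Z ler_pdivrMr ?exprn_gt0 // => HN'.
    have hs := sqr_sqrtr (ler0n R N).
    have : (4 * CS) ^+ 2 <= (q * Num.sqrt N%:R) ^+ 2.
      rewrite [X in _ <= X]exprMn hs; lra.
    have qs0 : 0 < q * Num.sqrt N%:R by rewrite mulr_gt0.
    move=> hh; nra.
  rewrite (_ : CS / _ / _ = (4 * CS) / (q * Num.sqrt N%:R) * (eps / 2)); last first.
    rewrite /q; field.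
    by rewrite !gt_eqF.
  apply: ler_piMl; first by rewrite divr_ge0 // ltW.
  by rewrite ler_pdivrMr ?mul1r // mulr_gt0.
have Fin : forall (Bad : set Omega), measurable Bad -> (Pr Bad <= eps%:E)%E ->
    ((1 - eps)%:E <= Pr (~` Bad))%E.
  move=> Bad mBad h; rewrite probability_setC //.
  have E : Pr Bad = (fine (Pr Bad))%:E by rewrite fineK //; exact: fin_num_measure.
  move: h; rewrite E lee_fin => h.
  by rewrite -EFinB lee_fin; lra.
have Near : forall w delta, norm2 (thhat N w - thstar) < eta ->
    norm2 (thhat N w - thstar) <= delta ->
    ((lambda * norm2 (thhat N w - thstar) ^+ 2)%:E
      <= supDelta lam p s Xs Theta thstar N delta w)%E.
  move=> w delta h1 h2; have [Tw _] := HE N w.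
  have hq := HQ1 _ Tw h1; have := F2 _ _ h2; apply: le_trans.
  by rewrite lee_fin; have := F1 w; lra.
move: c0; rewrite le_eqVlt => /orP[/eqP c_eq0 | cpos].
  set f := supDelta lam p s Xs Theta thstar N eta.
  have I0 : (\int[Pr]_(w in [set: Omega]) `|f w| = 0)%E.
    under eq_integral do rewrite gee0_abs ?supD0 ?ltW //.
    apply/eqP; rewrite eq_le; apply/andP; split.
      have := HCth eta N Heta Npos; rewrite -c_eq0 !mul0r => //.
    by apply: integral_ge0 => w _; apply: supD0; exact: ltW.
  have := (ae_eq_integral_abs Pr measurableT (HCthm N eta)).1 I0.
  move=> [A0 [mA0 PrA0 subA0]].
  exists (~` (B0 `|` A0)); split; first by apply: measurableC; exact: measurableU.
  split.
    move=> w /= /not_orP [nB0 nA0].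
    have ltr : norm2 (thhat N w - thstar) < eta.
      by rewrite ltNge; apply/negP => /Far.
    have fw0 : f w = 0%E.
      apply/eqP/negPn/negP => hne; apply: nA0; apply: subA0 => /= /(_ I).
      by move/eqP; rewrite (negbTE hne).
    have := Near w eta ltr (ltW ltr); rewrite -/f fw0 lee_fin => hh.
    have r0 : 0 <= norm2 (thhat N w - thstar) by apply: sqrtr_ge0.
    have hh2 : norm2 (thhat N w - thstar) ^+ 2 <= 0 by rewrite -(pmulr_rle0 _ Hlambda).
    have -> : norm2 (thhat N w - thstar) = 0.
      by apply/eqP; rewrite eq_le r0 andbT; nra.
    have -> : M = 8 * (Cth * Num.sqrt P%:R) / (eps * lambda) by rewrite /M mulrA.
    by rewrite -c_eq0 !mulr0 mul0r.
  apply: Fin; first exact: measurableU.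
  apply: le_trans (measureU2 _ mB0 mA0) _.
  move: PrA0 => /eqP; rewrite eq_le => /andP[hA0 _].
  apply: le_trans (leeD (lexx (Pr B0)) hA0) _.
  rewrite adde0; apply: le_trans PrB0 _; rewrite lee_fin; lra.
have Cth0 : Cth != 0 by apply: contraTneq cpos => ->; rewrite mul0r ltxx.
have sP0 : Num.sqrt (P%:R : R) != 0.
  by apply: contraTneq cpos => ->; rewrite mulr0 ltxx.
set u := M / Num.sqrt N%:R.
have u0 : 0 < u.
  apply: divr_gt0 => //.
  have -> : M = 8 * (Cth * Num.sqrt P%:R) / (eps * lambda) by rewrite /M mulrA.
  by apply: divr_gt0; apply: mulr_gt0.
pose B k := [set w | ((lambda * (2 ^+ k * u) ^+ 2)%:E
   <= supDelta lam p s Xs Theta thstar N (2 * 2 ^+ k * u) w)%E].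
have mB : forall k, measurable (B k).
  by move=> k; rewrite /B -[X in measurable X]setTI; exact: emeasurable_fun_c_infty.
have PrB : forall k, (Pr (B k) <= (eps / 4 * (2 ^+ k)^-1)%:E)%E.
  move=> k.
  have t0 : 0 < (2:R) ^+ k by rewrite exprn_gt0.
  have a0 : 0 < lambda * (2 ^+ k * u) ^+ 2 by rewrite mulr_gt0 // exprn_gt0 // mulr_gt0.
  have d0 : 0 < 2 * 2 ^+ k * u by apply: mulr_gt0 => //; apply: mulr_gt0.
  have PB := @prob_bound _ _ _ Pr _ _ _ (HCthm N _) (fun w => supD0 N _ w (ltW d0)) a0
     (HCth _ N d0 Npos).
  apply: le_trans PB _; rewrite lee_fin le_eqVlt; apply/orP; left; apply/eqP.
  rewrite /u /M; field.
  by rewrite Cth0 sP0 !gt_eqF.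
pose U n := \big[setU/set0]_(k < n) B k.
have mU : forall n, measurable (U n).
  by move=> n; apply: bigsetU_measurable => k _; exact: mB.
have PrU : forall n, (Pr (U n) <= (\sum_(k < n) eps / 4 * (2 ^+ k)^-1)%:E)%E.
  elim=> [|n IH].
    rewrite /U big_ord0 big_ord0 measure0; exact: lexx.
  rewrite /U big_ord_recr big_ord_recr /= EFinD.
  apply: le_trans (measureU2 _ (mU n) (mB n)) _.
  by apply: leeD; [exact: IH | exact: PrB].
have geo2 : forall n, \sum_(k < n) eps / 4 * (2 ^+ k)^-1 <= eps / 2.
  move=> n; rewrite -(big_distrr (eps / 4)) /=. rewrite (@geo R n).
  have : 0 <= 2 * ((2:R) ^+ n)^-1 by rewrite mulr_ge0 // invr_ge0 exprn_ge0.
  move=> h; nra.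
have Cover : forall n w, u < norm2 (thhat N w - thstar) ->
    norm2 (thhat N w - thstar) <= 2 ^+ n * u ->
    norm2 (thhat N w - thstar) < eta -> U n w.
  elim=> [|n IH] w h1 h2 h3.
    by move: h2; rewrite expr0 mul1r => h2; have := lt_le_trans h1 h2; rewrite ltxx.
  rewrite /U big_ord_recr /=.
  case: (lerP (norm2 (thhat N w - thstar)) (2 ^+ n * u)) => h4.
    by left; apply: IH.
  right; rewrite /B /=.
  have r0 : 0 <= 2 ^+ n * u by rewrite mulr_ge0 // ?exprn_ge0 // ltW.
  apply: le_trans (Near w _ h3 _); last by move: h2; rewrite exprS mulrA.
  rewrite lee_fin ler_pM2l //; nra.
have [K HK] : exists K, eta <= 2 ^+ K * u.
  exists (Num.Def.archi_bound (eta / u)).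
  set K := Num.Def.archi_bound (eta / u).
  have h1 : eta / u < K%:R by apply: archi_boundP; rewrite divr_ge0 // ltW.
  have h2 : (K%:R : R) <= 2 ^+ K.
    by rewrite -natrX ler_nat ltnW // ltn_expl.
  rewrite -ler_pdivrMr //; exact: ltW (lt_le_trans h1 h2).
exists (~` (B0 `|` U K)); split; first by apply: measurableC; exact: measurableU.
split.
  move=> w /= /not_orP [nB0 nU].
  have ltr : norm2 (thhat N w - thstar) < eta.
    by rewrite ltNge; apply/negP => /Far.
  have : norm2 (thhat N w - thstar) <= u.
    rewrite leNgt; apply/negP => hu; apply: nU; apply: Cover => //.
    exact: le_trans (ltW ltr) HK.
  by rewrite /u ler_pdivlMr // mulrC.
apply: Fin; first exact: measurableU.
apply: le_trans (measureU2 _ mB0 (mU K)) _.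
have : (Pr B0 + Pr (U K) <= (eps / 2)%:E + (eps / 2)%:E)%E.
  apply: leeD => //; apply: le_trans (PrU K) _; rewrite lee_fin; exact: geo2.
move=> h; apply: le_trans h _; rewrite -EFinD lee_fin; lra.
Qed.
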